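(* Let $(\mathsf{E},\mathcal{F},\mu)$ be a probability space, let $P_{1},P_{2}$ be $\mu$-invariant Markov kernels, and for each $i\in\{1,2\}$ let $T_{i}$ be either $P_{i}$ or $P_{i}^{*}P_{i}$. Let $\beta_{1},\beta_{2}:(0,\infty)\to(0,\infty)$ be decreasing with $\beta_{i}(s)\downarrow0$ as $s\to\infty$, and let $\Phi_{1},\Phi_{2}:\mathrm{L}^{2}(\mu)\to[0,\infty]$ be such that for $i=1,2$, all $f\in\mathrm{L}^{2}(\mu)$, $c>0$, $n\in\mathbb{N}$: $\Phi_{i}(cf)=c^{2}\Phi_{i}(f)$, $\Phi_{i}(P_{i}^{n}f)\le\Phi_{i}(f)$, $\|f-\mu(f)\|_{2}^{2}\le a_{i}\Phi_{i}(f-\mu(f))$ with $a_{i}:=\sup_{g\in\mathrm{L}_{0}^{2}(\mu)\setminus\{0\}}\|g\|_{2}^{2}/\Phi_{i}(g)$; assume also $\Phi_{1}(P_{2}^{n}f)\le\Phi_{1}(f)$ for all $n\in\mathbb{N}$, $f\in\mathrm{L}_{0}^{2}(\mu)$. Assume that for all $s>0$ and $f\in\mathrm{L}_{0}^{2}(\mu)$, \[ \|f\|_{2}^{2}\le s\,\mathcal{E}(T_{1},f)+\beta_{1}(s)\Phi_{1}(f),\qquad\mathcal{E}(T_{1},f)\le s\,\mathcal{E}(T_{2},f)+\beta_{2}(s)\Phi_{2}(f). \] Set $\Phi:=\Phi_{1}\vee\Phi_{2}$ and $\beta(s):=\inf\{s_{1}\beta_{2}(s_{2})+\beta_{1}(s_{1}):s_{1}>0,s_{2}>0,s_{1}s_{2}=s\}$.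 Then for all $s>0$ and $f\in\mathrm{L}_{0}^{2}(\mu)$, \[ \|f\|_{2}^{2}\le s\,\mathcal{E}(T_{2},f)+\beta(s)\Phi(f); \] moreover $\beta:(0,\infty)\to(0,\infty)$ is decreasing with $\beta(s)\downarrow0$ as $s\to\infty$, $\Phi(cf)=c^{2}\Phi(f)$ for $c>0$, and $\Phi(P_{2}^{n}f)\le\Phi(f)$ for all $n\in\mathbb{N}$, $f\in\mathrm{L}_{0}^{2}(\mu)$. Finally, writing $K_{i}(u):=u\beta_{i}(1/u)$, $K(u):=u\beta(1/u)$ for $u>0$ and $K^{*},K_{i}^{*}$ for the convex conjugates $K^{*}(v)=\sup_{u\ge0}\{uv-K(u)\}$ (with $K(0)=K_{i}(0)=0$), one has \[ K(u)=\inf\{K_{2}(u_{2})+u_{2}K_{1}(u_{1}):u_{1}>0,u_{2}>0,u_{1}u_{2}=u\},\qquad K^{*}=K_{2}^{*}\circ K_{1}^{*}. \]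
   Context: $\mathrm{L}^{2}(\mu)$ has inner product $\langle f,g\rangle=\int fg\,\mathrm{d}\mu$, norm $\|\cdot\|_{2}$; $\mathrm{L}_{0}^{2}(\mu)$ is the mean-zero subspace; $P^{*}$ is the $\mathrm{L}^{2}(\mu)$-adjoint of $P$; $\mathcal{E}(T,f):=\langle(\mathrm{Id}-T)f,f\rangle$. *)

(* Defs.v *)
From HB Require Import structures.
From mathcomp Require Import all_boot all_order all_algebra.
From mathcomp Require Import all_classical all_reals all_analysis.

Set Implicit Arguments.
Unset Strict Implicit.
Unset Printing Implicit Defensive.
Import Order.TTheory GRing.Theory Num.Theory.
Import numFieldNormedType.Exports.
Local Open Scope classical_set_scope.
Local Open Scope ring_scope.

Section L2defs.
Context {d : measure_display} {E : measurableType d} {R : realType}.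
Variable mu : {measure set E -> \bar R}.

(* f is (a representative of an element of) L^2(mu) *)
Definition L2 (f : E -> R) : Prop :=
  measurable_fun setT f /\ mu.-integrable setT (fun x => ((f x) ^+ 2)%:E).

Definition mean (f : E -> R) : R := Rintegral mu setT f.

Definition L20 (f : E -> R) : Prop := L2 f /\ mean f = 0.

Definition ip (f g : E -> R) : R := Rintegral mu setT (fun x => f x * g x).

Definition norm2sq (f : E -> R) : R := ip f f.

Definition dirichlet (T : (E -> R) -> (E -> R)) (f : E -> R) : R :=
  ip (fun x => f x - T f x) f.

(* a_Phi := sup_{g in L^2_0 \ {0}} ||g||^2 / Phi(g)  (in [0,+oo], with
   c/0 = +oo and c/+oo = 0, the conventions of [inve]) *)
Definition aconst (Phi : (E -> R) -> \bar R) : \bar R :=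
  ereal_sup [set ((norm2sq g)%:E * (Phi g)^-1)%E | g in [set g | L20 g /\ norm2sq g != 0]].
End L2defs.

Definition kop {d : measure_display} {E : measurableType d} {R : realType}
  (P : R.-pker E ~> E) (f : E -> R) : E -> R :=
  fun x => Rintegral (P x) setT f.

Definition kinvariant {d : measure_display} {E : measurableType d} {R : realType}
  (mu : {measure set E -> \bar R}) (P : R.-pker E ~> E) : Prop :=
  forall A, measurable A -> (\int[mu]_x P x A)%E = mu A.

Definition beta_comp {R : realType} (b1 b2 : R -> R) (s : R) : R :=
  inf [set y : R | exists s1 s2 : R,
          [/\ 0 < s1, 0 < s2, s1 * s2 = s & y = s1 * b2 s2 + b1 s1]].

Definition Kfun {R : realType} (b : R -> R) (u : R) : R :=
  if 0 < u then u * b u^-1 else 0.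

(* convex conjugate K^*(v) = sup_{u >= 0} (u v - K(u)), extended to
   v in \bar R (so that K2^* o K1^* makes sense when K1^* takes +oo) *)
Definition conj {R : realType} (K : R -> R) (v : \bar R) : \bar R :=
  ereal_sup [set (u%:E * v - (K u)%:E)%E | u in [set u : R | 0 <= u]].

(* Main.v *)
Require Import Defs.
From HB Require Import structures.
From mathcomp Require Import all_boot all_order all_algebra.
From mathcomp Require Import all_classical all_reals all_analysis.
From mathcomp Require Import ring lra.
Import Order.TTheory GRing.Theory Num.Theory.
Import numFieldNormedType.Exports.
Local Open Scope classical_set_scope.
Local Open Scope ring_scope.

Section Helpers.
Variable R : realType.
Variables b1 b2 : R -> R.
Hypothesis b1p : forall s, 0 < s -> 0 < b1 s.
Hypothesis b1d : forall s t, 0 < s -> s <= t -> b1 t <= b1 s.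
Hypothesis b2p : forall s, 0 < s -> 0 < b2 s.
Hypothesis b2d : forall s t, 0 < s -> s <= t -> b2 t <= b2 s.

Definition Sb (s : R) := [set y : R | exists s1 s2 : R,
          [/\ 0 < s1, 0 < s2, s1 * s2 = s & y = s1 * b2 s2 + b1 s1]].

Lemma Sb_ne s : 0 < s -> nonempty (Sb s).
Proof. move=> s0; exists (1 * b2 s + b1 1), 1, s; split => //; by rewrite mul1r. Qed.

Lemma Sb_lb0 s : lbound (Sb s) 0.
Proof.
move=> y [s1 [s2 [h1 h2 _ ->]]].
have := b1p _ h1; have := b2p _ h2 => q1 q2.
by apply: addr_ge0; [apply: mulr_ge0; apply: ltW|apply: ltW].
Qed.

Lemma Sb_hlb s : has_lbound (Sb s).
Proof. by exists 0; apply: Sb_lb0. Qed.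

Lemma Sb_inf_le s y : Sb s y -> beta_comp b1 b2 s <= y.
Proof. by move=> Sy; apply: (ge_inf (Sb_hlb s)). Qed.

Lemma beta_pos s : 0 < s -> 0 < beta_comp b1 b2 s.
Proof.
move=> s0.
apply: (@lt_le_trans _ _ (Num.min (b2 s) (b1 1))); last first.
  change (Num.min (b2 s) (b1 1) <= inf (Sb s)). apply: (lb_le_inf (Sb_ne _ s0)).
  move=> y [s1 [s2 [h1 h2 hs ->]]].
  have q1 := b1p _ h1; have q2 := b2p _ h2.
  have [le1|lt1] := lerP s1 1.
    have := b1d _ _ h1 le1 => hh.
    rewrite ge_min; apply/orP; right.
    have : 0 <= s1 * b2 s2 by apply: mulr_ge0; apply: ltW.
    lra.
  have hs2 : s2 <= s by rewrite -hs; nra.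
  have := b2d _ _ h2 hs2 => hh.
  rewrite ge_min; apply/orP; left.
  have : b2 s2 <= s1 * b2 s2 by nra.
  have := ltW q1. lra.
rewrite lt_min; apply/andP; split; [exact: b2p | exact: b1p].
Qed.

Lemma beta_dec s t : 0 < s -> s <= t -> beta_comp b1 b2 t <= beta_comp b1 b2 s.
Proof.
move=> s0 st.
change (beta_comp b1 b2 t <= inf (Sb s)); apply: (lb_le_inf (Sb_ne _ s0)) => y [s1 [s2 [h1 h2 hs ->]]].
have t0 : 0 < t by apply: lt_le_trans st.
apply: (@le_trans _ _ (s1 * b2 (s2 * (t / s)) + b1 s1)).
  apply: Sb_inf_le.
  exists s1, (s2 * (t / s)); split => //.
    by apply: mulr_gt0 => //; apply: divr_gt0.
  by rewrite mulrA hs mulrCA divff ?mulr1 // gt_eqF.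
have : b2 (s2 * (t / s)) <= b2 s2.
  apply: b2d => //.
  have : 1 <= t / s by rewrite ler_pdivlMr // mul1r.
  move=> h; nra.
by move=> hh; rewrite lerD2r ler_pM2l.
Qed.


Lemma beta_lim : (b1 s @[s --> +oo] --> 0) -> (b2 s @[s --> +oo] --> 0) ->
  (beta_comp b1 b2 s @[s --> +oo] --> 0).
Proof.
move=> /cvgrPdist_lt l1 /cvgrPdist_lt l2.
apply/cvgrPdist_lt => e e0.
have e20 : 0 < e / 2 by apply: divr_gt0.
have [M1 [_ HM1]] := l1 _ e20.
pose s1 := Num.max M1 0 + 1.
have hA : M1 <= Num.max M1 0 by rewrite le_max lexx.
have s1M : M1 < s1 by rewrite /s1; lra.
have hB : 0 <= Num.max M1 0 by rewrite le_max lexx orbT.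
have s10 : 0 < s1 by rewrite /s1; lra.
have hb1 := HM1 _ s1M.
have e30 : 0 < e / (2 * s1) by apply: divr_gt0 => //; apply: mulr_gt0.
have [M2 [_ HM2]] := l2 _ e30.
exists (s1 * Num.max M2 0); split; first exact: num_real.
move=> s Hs.
have hM2 : M2 <= Num.max M2 0 by rewrite le_max lexx.
have hM0 : 0 <= Num.max M2 0 by rewrite le_max lexx orbT.
have s0 : 0 < s.
  apply: le_lt_trans Hs; apply: mulr_ge0 => //; exact: ltW.
pose s2 := s / s1.
have s2M : M2 < s2.
  rewrite /s2 ltr_pdivlMr //; apply: le_lt_trans Hs.
  by rewrite mulrC ler_pM2l.
have s20 : 0 < s2 by apply: divr_gt0.
have hb2 := HM2 _ s2M.
have bp := beta_pos _ s0.
rewrite sub0r normrN gtr0_norm //.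
apply: (@le_lt_trans _ _ (s1 * b2 s2 + b1 s1)).
  apply: Sb_inf_le; exists s1, s2; split => //.
  by rewrite /s2 mulrC divfK // gt_eqF.
move: hb1 hb2; rewrite !sub0r !normrN.
have := b1p _ s10; have := b2p _ s20 => q2 q1.
rewrite !gtr0_norm // => hb1 hb2.
have : s1 * b2 s2 < s1 * (e / (2 * s1)) by rewrite ltr_pM2l.
have -> : s1 * (e / (2 * s1)) = e / 2.
  by field; rewrite gt_eqF.
lra.
Qed.

Definition Tb (u : R) := [set y : R | exists u1 u2 : R,
           [/\ 0 < u1, 0 < u2, u1 * u2 = u & y = Kfun b2 u2 + u2 * Kfun b1 u1]].

Lemma KfunE (b : R -> R) u : 0 < u -> Kfun b u = u * b u^-1.
Proof. by move=> u0; rewrite /Kfun u0. Qed.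

Lemma Kfun_pos (b : R -> R) u : (forall s, 0 < s -> 0 < b s) -> 0 < u -> 0 < Kfun b u.
Proof.
move=> bp u0; rewrite KfunE //; apply: mulr_gt0 => //; apply: bp.
by rewrite invr_gt0.
Qed.

Lemma Tb_ne u : 0 < u -> nonempty (Tb u).
Proof. move=> u0; exists (Kfun b2 u + u * Kfun b1 1), 1, u; split => //; by rewrite mul1r. Qed.

Lemma Tb_lb0 u : lbound (Tb u) 0.
Proof.
move=> y [u1 [u2 [h1 h2 _ ->]]].
have := @Kfun_pos b1 u1 b1p h1; have := @Kfun_pos b2 u2 b2p h2 => q1 q2.
apply: addr_ge0; first exact: ltW.
by apply: mulr_ge0; apply: ltW.
Qed.

Lemma Tb_inf_le u y : Tb u y -> inf (Tb u) <= y.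
Proof. by move=> Ty; apply: ge_inf => //; exists 0; apply: Tb_lb0. Qed.

Lemma K_inf u : 0 < u -> Kfun (beta_comp b1 b2) u = inf (Tb u).
Proof.
move=> u0; rewrite KfunE //.
have ui0 : 0 < u^-1 by rewrite invr_gt0.
apply/le_anti/andP; split.
  apply: (lb_le_inf (Tb_ne _ u0)) => y [u1 [u2 [h1 h2 hu ->]]].
  have i1 : 0 < u1^-1 by rewrite invr_gt0.
  have i2 : 0 < u2^-1 by rewrite invr_gt0.
  have hh : beta_comp b1 b2 u^-1 <= u1^-1 * b2 u2^-1 + b1 u1^-1.
    apply: Sb_inf_le; exists u1^-1, u2^-1; split => //.
    by rewrite -hu invfM.
  rewrite !KfunE //.
  apply: (@le_trans _ _ (u * (u1^-1 * b2 u2^-1 + b1 u1^-1))).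
    by rewrite ler_pM2l.
  rewrite -hu le_eqVlt; apply/orP; left; apply/eqP.
  by field; rewrite gt_eqF.
have h : u^-1 * inf (Tb u) <= beta_comp b1 b2 u^-1.
  change (u^-1 * inf (Tb u) <= inf (Sb u^-1)).
  apply: (lb_le_inf (Sb_ne _ ui0)) => y [s1 [s2 [h1 h2 hs ->]]].
  have i1 : 0 < s1^-1 by rewrite invr_gt0.
  have i2 : 0 < s2^-1 by rewrite invr_gt0.
  rewrite ler_pdivrMl //.
  apply: Tb_inf_le; exists s1^-1, s2^-1; split => //.
    by rewrite -invfM hs invrK.
  rewrite !KfunE // !invrK.
  have -> : u = (s1 * s2)^-1 by rewrite hs invrK.
  field. by apply/andP; split; rewrite gt_eqF.
have : inf (Tb u) = u * (u^-1 * inf (Tb u)).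
  by rewrite mulrA divff ?mul1r // gt_eqF.
move=> ->; by rewrite ler_pM2l.
Qed.

Lemma Kfun0 (b : R -> R) : Kfun b 0 = 0.
Proof. by rewrite /Kfun ltxx. Qed.

Lemma conj_ge0 (K : R -> R) x : K 0 = 0 -> (0 <= conj K x)%E.
Proof.
move=> K0; apply: ereal_sup_ubound; exists 0 => //=.
by rewrite mul0e K0 sube0.
Qed.

Lemma conj_ub (K : R -> R) x u : 0 <= u -> (u%:E * x - (K u)%:E <= conj K x)%E.
Proof. by move=> u0; apply: ereal_sup_ubound; exists u. Qed.

Local Open Scope ereal_scope.

Lemma conj_comp (v : R) : conj (Kfun (beta_comp b1 b2)) v%:E = conj (Kfun b2) (conj (Kfun b1) v%:E).
Proof.
have C1ge0 := conj_ge0 (Kfun b1) v%:E (Kfun0 b1).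
set C1 := conj (Kfun b1) v%:E in C1ge0 *.
have RHSge0 := conj_ge0 (Kfun b2) C1 (Kfun0 b2).
set RHS := conj (Kfun b2) C1 in RHSge0 *.
have LHSge0 := conj_ge0 (Kfun (beta_comp b1 b2)) v%:E (Kfun0 (beta_comp b1 b2)).
set LHS := conj _ v%:E in LHSge0 *.
apply/le_anti/andP; split.
  apply/ereal_supP => y [u /= u0 <-].
  case: (eqVneq u 0%R) => [->|un0].
    by rewrite mul0e Kfun0 sube0.
  have {u0 un0} u0 : (0 < u)%R by rewrite lt_neqAle eq_sym un0 u0.
  move: RHSge0; case E : RHS => [r| |] // r0; last by rewrite leey.
  rewrite -EFinM -EFinB lee_fin.
  have : (u * v - r <= Kfun (beta_comp b1 b2) u)%R; last by move=> h; rewrite lerBlDr addrC -lerBlDr.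
  rewrite K_inf //.
  apply: (lb_le_inf (Tb_ne _ u0)) => t [u1 [u2 [h1 h2 hu ->]]].
  have hc1 := conj_ub (Kfun b1) v%:E u1 (ltW h1).
  have hc2 := conj_ub (Kfun b2) C1 u2 (ltW h2).
  rewrite -/C1 in hc1; rewrite -/RHS E in hc2.
  clear E; clearbody RHS C1.
  move: hc1 hc2 C1ge0; case: C1 => [c| |] //= hc1 hc2 c0; last first.
    by move: hc2; rewrite mulry gtr0_sg // mul1e.
  move: hc1 hc2; rewrite -!EFinM -!EFinB !lee_fin => hc1 hc2.
  rewrite -hu.
  have : (u2 * (u1 * v - Kfun b1 u1) <= u2 * c)%R by rewrite ler_pM2l.
  move: hc2; lra.
apply/ereal_supP => y [u2 /= u20 <-].
case: (eqVneq u2 0%R) => [->|un0].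
  by rewrite mul0e Kfun0 sube0.
have {u20 un0} u20 : (0 < u2)%R by rewrite lt_neqAle eq_sym un0 u20.
move: LHSge0; case E : LHS => [L| |] // L0; last by rewrite leey.
have K2p := @Kfun_pos b2 u2 b2p u20.
have hC : C1 <= ((L + Kfun b2 u2) / u2)%:E.
  apply/ereal_supP => z [u1 /= u10 <-].
  rewrite -EFinM -EFinB lee_fin.
  rewrite ler_pdivlMr //.
  case: (eqVneq u1 0%R) => [->|u1n0].
    rewrite mul0r Kfun0 subr0 mul0r; apply: addr_ge0; [by rewrite -lee_fin | exact: ltW].
  have {u10 u1n0} u10 : (0 < u1)%R by rewrite lt_neqAle eq_sym u1n0 u10.
  have hK : (Kfun (beta_comp b1 b2) (u1 * u2) <= Kfun b2 u2 + u2 * Kfun b1 u1)%R.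
    rewrite K_inf; last exact: mulr_gt0.
    by apply: Tb_inf_le; exists u1, u2.
  have hL := conj_ub (Kfun (beta_comp b1 b2)) v%:E (u1 * u2)%R (ltW (mulr_gt0 u10 u20)).
  rewrite -/LHS E -EFinM -EFinB lee_fin in hL.
  move: hK hL; nra.
clearbody RHS C1.
move: hC C1ge0; case: C1 => [c| |] //= hc c0.
rewrite -EFinM -EFinB lee_fin.
move: hc; rewrite lee_fin ler_pdivlMr // => hc.
nra.
Qed.

Local Close Scope ereal_scope.

Lemma part1_real (N D1 D2 s a b m : R) : 0 < s -> 0 <= a -> a <= m -> 0 <= b -> b <= m ->
  (forall s1, 0 < s1 -> N <= s1 * D1 + b1 s1 * a) ->
  (forall s2, 0 < s2 -> D1 <= s2 * D2 + b2 s2 * b) ->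
  N <= s * D2 + beta_comp b1 b2 s * m.
Proof.
move=> s0 a0 am b0 bm h1 h2.
have key : forall y, Sb s y -> N <= s * D2 + y * m.
  move=> y [s1 [s2 [q1 q2 hs ->]]].
  have := h1 _ q1; have := h2 _ q2 => e2 e1.
  have p1 := b1p _ q1; have p2 := b2p _ q2.
  have : s1 * D1 <= s1 * (s2 * D2 + b2 s2 * b) by rewrite ler_pM2l.
  have : b2 s2 * b <= b2 s2 * m by rewrite ler_pM2l.
  have : b1 s1 * a <= b1 s1 * m by rewrite ler_pM2l.
  rewrite -hs. nra.
have m0 : 0 <= m by apply: le_trans am.
case: (eqVneq m 0) => [m00|mn0].
  have [y Sy] := Sb_ne _ s0.
  by have := key _ Sy; rewrite m00 !mulr0.
have mp : 0 < m by rewrite lt_neqAle eq_sym mn0.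
have : (N - s * D2) / m <= beta_comp b1 b2 s.
  change ((N - s * D2) / m <= inf (Sb s)).
  apply: (lb_le_inf (Sb_ne _ s0)) => y Sy.
  rewrite ler_pdivrMr //; have := key _ Sy; lra.
rewrite ler_pdivrMr //; lra.
Qed.

End Helpers.

Theorem proposition32 (R : realType) (d : measure_display) (E : measurableType d)
  (mu : probability E R) (P1 P2 : R.-pker E ~> E)
  (Q1 Q2 T1 T2 : (E -> R) -> (E -> R))
  (b1 b2 : R -> R) (Phi1 Phi2 : (E -> R) -> \bar R) :
  (* P1, P2 are mu-invariant Markov kernels *)
  kinvariant mu P1 -> kinvariant mu P2 ->
  (* Q_i is the L^2(mu)-adjoint P_i^* of P_i *)
  (forall f, L2 mu f -> L2 mu (Q1 f)) ->
  (forall f g, L2 mu f -> L2 mu g -> ip mu (kop P1 f) g = ip mu f (Q1 g)) ->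
  (forall f, L2 mu f -> L2 mu (Q2 f)) ->
  (forall f g, L2 mu f -> L2 mu g -> ip mu (kop P2 f) g = ip mu f (Q2 g)) ->
  (* T_i is either P_i or P_i^* P_i *)
  (T1 = kop P1 \/ T1 = Q1 \o kop P1) ->
  (T2 = kop P2 \/ T2 = Q2 \o kop P2) ->
  (* beta_i : (0,oo) -> (0,oo) decreasing, beta_i(s) -> 0 as s -> oo *)
  (forall s, 0 < s -> 0 < b1 s) ->
  (forall s t, 0 < s -> s <= t -> b1 t <= b1 s) ->
  (b1 s @[s --> +oo] --> 0) ->
  (forall s, 0 < s -> 0 < b2 s) ->
  (forall s t, 0 < s -> s <= t -> b2 t <= b2 s) ->
  (b2 s @[s --> +oo] --> 0) ->
  (* Phi_i : L^2(mu) -> [0, oo] *)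
  (forall f, L2 mu f -> (0 <= Phi1 f)%E) ->
  (forall f, L2 mu f -> (0 <= Phi2 f)%E) ->
  (forall f c, L2 mu f -> 0 < c -> Phi1 (fun x => (c * f x)%R) = ((c ^+ 2)%R%:E * Phi1 f)%E) ->
  (forall f c, L2 mu f -> 0 < c -> Phi2 (fun x => (c * f x)%R) = ((c ^+ 2)%R%:E * Phi2 f)%E) ->
  (forall f n, L2 mu f -> (Phi1 (iter n (kop P1) f) <= Phi1 f)%E) ->
  (forall f n, L2 mu f -> (Phi2 (iter n (kop P2) f) <= Phi2 f)%E) ->
  (forall f, L2 mu f ->
     ((norm2sq mu (fun x => (f x - mean mu f)%R))%:E
        <= aconst mu Phi1 * Phi1 (fun x => (f x - mean mu f)%R))%E) ->
  (forall f, L2 mu f ->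
     ((norm2sq mu (fun x => (f x - mean mu f)%R))%:E
        <= aconst mu Phi2 * Phi2 (fun x => (f x - mean mu f)%R))%E) ->
  (forall f n, L20 mu f -> (Phi1 (iter n (kop P2) f) <= Phi1 f)%E) ->
  (* the two weak Poincare-type inequalities *)
  (forall s f, 0 < s -> L20 mu f ->
     ((norm2sq mu f)%:E <= (s * dirichlet mu T1 f)%R%:E + (b1 s)%:E * Phi1 f)%E) ->
  (forall s f, 0 < s -> L20 mu f ->
     ((dirichlet mu T1 f)%:E <= (s * dirichlet mu T2 f)%R%:E + (b2 s)%:E * Phi2 f)%E) ->
  let Phi := fun f => Order.max (Phi1 f) (Phi2 f) in
  let beta := beta_comp b1 b2 in
  (forall s f, 0 < s -> L20 mu f ->
         ((norm2sq mu f)%:E <= (s * dirichlet mu T2 f)%R%:E + (beta s)%:E * Phi f)%E) /\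
      (forall s, 0 < s -> 0 < beta s) /\
      (forall s t, 0 < s -> s <= t -> beta t <= beta s) /\
      (beta s @[s --> +oo] --> 0) /\
      (forall f c, L2 mu f -> 0 < c -> Phi (fun x => (c * f x)%R) = ((c ^+ 2)%R%:E * Phi f)%E) /\
      (forall f n, L20 mu f -> (Phi (iter n (kop P2) f) <= Phi f)%E) /\
      (forall u, 0 < u ->
         Kfun beta u = inf [set y : R | exists u1 u2 : R,
           [/\ 0 < u1, 0 < u2, u1 * u2 = u & y = Kfun b2 u2 + u2 * Kfun b1 u1]]) /\
    (forall v : R, conj (Kfun beta) v%:E = conj (Kfun b2) (conj (Kfun b1) v%:E)).
Proof.
move=> _ _ _ _ _ _ _ _ b1p b1d b1l b2p b2d b2l Ph1p Ph2p Ph1c Ph2c _ Ph2i _ _ Ph12 H1 H2 Phi beta.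
split.
  move=> s f s0 Lf.
  have Lf2 := Lf.1.
  have p10 := Ph1p f Lf2; have p20 := Ph2p f Lf2.
  rewrite /Phi.
  have bp : 0 < beta s by exact: (@beta_pos R b1 b2 b1p b1d b2p b2d s s0).
  have inf_case : Order.max (Phi1 f) (Phi2 f) = +oo%E ->
     ((norm2sq mu f)%:E <= (s * dirichlet mu T2 f)%:E + (beta s)%:E * Order.max (Phi1 f) (Phi2 f))%E.
    move=> ->; by rewrite mulry gtr0_sg // mul1e addey // leey.
  move: inf_case p10 p20 (H1^~ f) (H2^~ f).
  case: (Phi1 f) => [a| |] //; case: (Phi2 f) => [b| |] //.
  - move=> _ a0 b0 h1 h2.
    rewrite !lee_fin in a0 b0.
    have [ab|ba] := leP a b.
    + rewrite max_r ?lee_fin //.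
      apply: (@part1_real R b1 b2 b1p b2p (norm2sq mu f) (dirichlet mu T1 f) (dirichlet mu T2 f) s _ _ _ s0 a0 ab b0 (lexx b)).
        by move=> s1 q1; have := h1 s1 q1 Lf; rewrite -EFinM -EFinD lee_fin.
      by move=> s2 q2; have := h2 s2 q2 Lf; rewrite -EFinM -EFinD lee_fin.
    + rewrite max_l; last by rewrite lee_fin ltW.
      rewrite -EFinM -EFinD lee_fin.
      apply: (@part1_real R b1 b2 b1p b2p (norm2sq mu f) (dirichlet mu T1 f) (dirichlet mu T2 f) s _ _ _ s0 a0 (lexx a) b0 (ltW ba)).
        by move=> s1 q1; have := h1 s1 q1 Lf; rewrite -EFinM -EFinD lee_fin.
      by move=> s2 q2; have := h2 s2 q2 Lf; rewrite -EFinM -EFinD lee_fin.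
  - by move=> inf_case *; apply: inf_case; rewrite max_r ?leey.
  - by move=> inf_case *; apply: inf_case; rewrite max_l ?leey.
  - by move=> inf_case *; apply: inf_case; rewrite max_l ?leey.
split; first by move=> s s0; exact: (@beta_pos R b1 b2 b1p b1d b2p b2d s s0).
split; first by move=> s t s0 st; exact: (@beta_dec R b1 b2 b1p b2p b2d s t s0 st).
split; first exact: (@beta_lim R b1 b2 b1p b1d b2p b2d b1l b2l).
split.
  move=> f c Lf c0; rewrite /Phi Ph1c // Ph2c // maxe_pMr //.
  by rewrite lee_fin sqr_ge0.
split.
  move=> f n Lf; rewrite /Phi ge_max; apply/andP; split.
    apply: le_trans (Ph12 f n Lf) _; by rewrite le_max lexx.
  apply: le_trans (Ph2i f n Lf.1) _; by rewrite le_max lexx orbT.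
split.
  by move=> u u0; exact: (@K_inf R b1 b2 b1p b2p u u0).
by move=> v; exact: (@conj_comp R b1 b2 b1p b2p v).
Qed.
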